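(* If an invariant state is supported on $V\ominus\operatorname{ran}|Z|_1$, then it is supported on $W$.
   Context: Fix integers $N\ge 2$ and $n_1\ge n_2\ge\dots\ge n_N\ge 1$. Let $\mathcal H$ be a finite-dimensional complex Hilbert space with orthonormal basis $\{|-\rangle,|+\rangle\}\cup\{|a_k\rangle:1\le k\le N,\ 0\le a\le n_k-1\}$. For vectors $x,y$, $|x\rangle\langle y|$ denotes the operator $u\mapsto\langle y,u\rangle x$. Put $E_k=\mathrm{span}\{|a_k\rangle:0\le a\le n_k-1\}$, $P_k$ the orthogonal projection onto $E_k$, $P_\pm=|\pm\rangle\langle\pm|$, $\zeta_k=e^{2\pi i/n_k}$, and $\varphi_{a_k}=n_k^{-1/2}\sum_{b=0}^{n_k-1}\zeta_k^{-ba}|b_k\rangle$ for $0\le a\le n_k-1$. For $1\le k\le N-1$ let $Z_k=n_k^{-1/2}\sum_{b=0}^{n_{k+1}-1}\sum_{a=0}^{n_k-1}\zeta_k^{ba}|b_{k+1}\rangle\langle a_k|$ (an operator on $\mathcal H$), $|Z|_k=Z_k^*Z_k$. The transport operator is $Z=\sum_{k=1}^{N-1}Z_k$. Let $\omega$ range over the set $\{\omega_+,\omega_-,\omega_1,\dots,\omega_{N-1}\}$ of (distinct) Bohr frequencies, and let $\Gamma_{\pm,\omega}>0$, $\gamma_{\pm,\omega}\in\mathbb R$ be constants. Kraus operators: $L_{-,\omega_+}=\sqrt{n_1\Gamma_{-,\omega_+}}|\varphi_{0_1}\rangle\langle +|$, $L_{+,\omega_+}=\sqrt{n_1\Gamma_{+,\omega_+}}|+\rangle\langle\varphi_{0_1}|$,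 $L_{-,\omega_k}=\sqrt{\Gamma_{-,\omega_k}}Z_k$, $L_{+,\omega_k}=\sqrt{\Gamma_{+,\omega_k}}Z_k^*$ ($1\le k\le N-1$), $L_{-,\omega_-}=\sqrt{\Gamma_{-,\omega_-}}|-\rangle\langle\varphi_{0_N}|$, $L_{+,\omega_-}=0$. Effective Hamiltonian $H_{\mathrm{eff}}=n_1\gamma_{-,\omega_+}P_+-n_1\gamma_{+,\omega_+}|\varphi_{0_1}\rangle\langle\varphi_{0_1}|+\gamma_{-,\omega_-}|\varphi_{0_N}\rangle\langle\varphi_{0_N}|-\gamma_{+,\omega_-}P_-+\sum_{k=1}^{N-1}(\gamma_{-,\omega_k}|Z|_k-\gamma_{+,\omega_k}P_{k+1})$. The generator is $\mathcal L(\rho)=-i[H_{\mathrm{eff}},\rho]+\sum_{\omega}\sum_{\epsilon=\pm}\big(L_{\epsilon,\omega}\rho L_{\epsilon,\omega}^*-\tfrac12\{L_{\epsilon,\omega}^*L_{\epsilon,\omega},\rho\}\big)$. A state is a positive operator of trace one; it is invariant if $\mathcal L(\rho)=0$; an operator is supported on a subspace $E$ if its range is contained in $E$. The interaction-free subspace is $W=\bigcap_{\omega,\epsilon=\pm}(\ker L_{\epsilon,\omega}\cap\ker L_{\epsilon,\omega}^* )$. $V$ is the orthogonal complement of the set $\{|-\rangle,|+\rangle,Z^n\varphi_{0_1},Z^{*n}\varphi_{0_N},Z^{*s}\varphi_{0_{2m+1}}:0\le n\le N-1,\ 1\le m\le (N-1)/2,\ 1\le s\le 2m\}$. $A\ominus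 B$ denotes $A\cap B^\perp$. *)

(* Defs.v *)
From mathcomp Require Import all_boot all_order all_algebra.
From mathcomp Require Import complex.
From mathcomp Require Import reals trigo.
Import Order.TTheory GRing.Theory Num.Theory.
Local Open Scope ring_scope.

Unset Implicit Arguments.
Unset Strict Implicit.
Unset Printing Implicit Defensive.

(*  - the paper's levels k = 1..N are indexed here by k = 0..N-1;           *)
(*    paper's n_k is here  n (k-1);  paper's |a_k> is  ket_site (k-1) a.    *)
(*  - signs epsilon = +/- are booleans: true = +, false = -.                *)
(*  - the Bohr frequencies are OmPlus (omega_+), OmMinus (omega_-) and      *)
(*    OmK k (paper's omega_{k+1}, k = 0..N-2).                              *)
(*  - the Hilbert space is C^basis with orthonormal basis basis, realised   *)
(*    as column vectors 'cV[R[i]]_(dim N n), operators as 'M[R[i]]_(dim N n)*)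
(*    (matrices in that orthonormal basis).                                 *)

Inductive bohr := OmPlus | OmMinus | OmK of nat.

Section Model.

Variable R : realType.
Local Notation C := (R[i]).

Variables (N : nat) (n : nat -> nat).

(* basis: inl false = |->, inl true = |+>, inr (k; a) = |a_k> *)
Definition basis := (bool + {k : 'I_N & 'I_(n k)})%type.
Definition hdim := #|{: basis}|.
Local Notation d := hdim.

Definition rC (x : R) : C := Complex x 0.

Definition site_idx (x : basis) : option (nat * nat) :=
  match x with
  | inl _ => None
  | inr u => Some (nat_of_ord (tag u), nat_of_ord (tagged u))
  end.

Definition ket_site (k a : nat) : 'cV[C]_d :=
  \col_i ((site_idx (enum_val i) == Some (k, a))%:R).
Definition ket_pm (s : bool) : 'cV[C]_d :=
  \col_i ((enum_val i == inl s)%:R).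

Definition adj {p q : nat} (A : 'M[C]_(p, q)) : 'M[C]_(q, p) :=
  (map_mx Num.conj A)^T.
(* inner product <u, v>, antilinear in u *)
Definition dotv (u v : 'cV[C]_d) : C := (adj u *m v) ord0 ord0.
Definition outer (u v : 'cV[C]_d) : 'M[C]_d := u *m adj v.

Definition zeta (k : nat) : C :=
  Complex (cos (2 * pi / (n k)%:R)) (sin (2 * pi / (n k)%:R)).

Definition invsqrt (x : R) : C := rC (Num.sqrt x)^-1.

Definition phi (k a : nat) : 'cV[C]_d :=
  invsqrt (n k)%:R *: \sum_(b < n k) (zeta k ^- (b * a)) *: ket_site k b.

Definition Zk (k : nat) : 'M[C]_d :=
  invsqrt (n k)%:R *:
    \sum_(b < n k.+1) \sum_(a < n k)
       (zeta k ^+ (b * a)) *: outer (ket_site k.+1 b) (ket_site k a).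

Definition Ztr : 'M[C]_d := \sum_(k < N.-1) Zk k.

Definition absZ (k : nat) : 'M[C]_d := adj (Zk k) *m Zk k.

Definition Pk (k : nat) : 'M[C]_d :=
  \sum_(b < n k) outer (ket_site k b) (ket_site k b).
Definition Ppm (s : bool) : 'M[C]_d := outer (ket_pm s) (ket_pm s).

Definition valid_bohr (w : bohr) : bool :=
  match w with OmK k => (k.+1 < N)%N | _ => true end.

Section Kraus.
Variable Gam : bool -> bohr -> R.
Definition kraus : seq 'M[C]_d :=
  [:: rC (Num.sqrt ((n 0)%:R * Gam false OmPlus)) *: outer (phi 0 0) (ket_pm true);
      rC (Num.sqrt ((n 0)%:R * Gam true OmPlus)) *: outer (ket_pm true) (phi 0 0);
      rC (Num.sqrt (Gam false OmMinus)) *: outer (ket_pm false) (phi N.-1 0);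
      0 ]
  ++ flatten [seq [:: rC (Num.sqrt (Gam false (OmK k))) *: Zk k;
                     rC (Num.sqrt (Gam true (OmK k))) *: adj (Zk k)]
             | k <- iota 0 N.-1].
End Kraus.

Section Heff.
Variable gam : bool -> bohr -> R.
Definition Heff : 'M[C]_d :=
  rC ((n 0)%:R * gam false OmPlus) *: Ppm true
  - rC ((n 0)%:R * gam true OmPlus) *: outer (phi 0 0) (phi 0 0)
  + rC (gam false OmMinus) *: outer (phi N.-1 0) (phi N.-1 0)
  - rC (gam true OmMinus) *: Ppm false
  + \sum_(k < N.-1) (rC (gam false (OmK k)) *: absZ k
                     - rC (gam true (OmK k)) *: Pk k.+1).
End Heff.

Definition generator (Gam gam : bool -> bohr -> R) (rho : 'M[C]_d) : 'M[C]_d :=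
  - 'i *: (Heff gam *m rho - rho *m Heff gam)
  + \sum_(L <- kraus Gam)
      (L *m rho *m adj L
       - 2^-1 *: (adj L *m L *m rho + rho *m (adj L *m L))).

Definition positive_op (A : 'M[C]_d) : Prop :=
  forall v : 'cV[C]_d, 0 <= dotv v (A *m v).
Definition is_state (rho : 'M[C]_d) : Prop :=
  positive_op rho /\ \tr rho = 1.
Definition invariant_st (Gam gam : bool -> bohr -> R) (rho : 'M[C]_d) : Prop :=
  generator Gam gam rho = 0.

Definition subsp := 'cV[C]_d -> Prop.
Definition orth (S : subsp) : subsp := fun v => forall u, S u -> dotv u v = 0.
Definition ran (A : 'M[C]_d) : subsp := fun v => exists u, v = A *m u.
Definition capsp (S T : subsp) : subsp := fun v => S v /\ T v.
Definition ominus (S T : subsp) : subsp := capsp S (orth T).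
Definition supported (A : 'M[C]_d) (E : subsp) : Prop := forall u, E (A *m u).

Definition Wsp (Gam : bool -> bohr -> R) : subsp :=
  fun v => forall L, L \in kraus Gam -> L *m v = 0 /\ adj L *m v = 0.

Definition Vgen : subsp := fun u =>
  u = ket_pm false \/ u = ket_pm true
  \/ (exists2 m, (m <= N - 1)%N & u = iter m (mulmx Ztr) (phi 0 0))
  \/ (exists2 m, (m <= N - 1)%N & u = iter m (mulmx (adj Ztr)) (phi N.-1 0))
  \/ (exists m s, [/\ (1 <= m)%N, (m <= (N - 1) %/ 2)%N, (1 <= s)%N,
                      (s <= 2 * m)%N &
                      u = iter s (mulmx (adj Ztr)) (phi (2 * m) 0)]).
Definition Vsp : subsp := orth Vgen.

End Model.

(* Main.v *)
Require Import Defs.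
From mathcomp Require Import all_boot all_order all_algebra.
From mathcomp Require Import complex.
From mathcomp Require Import reals trigo.
From mathcomp Require Import ring lra zify.
Import Order.TTheory GRing.Theory Num.Theory.
Local Open Scope ring_scope.

Section Z.
Variable R : realType.
Local Notation C := R[i].

Lemma cis_pow (t : R) j :
  (Complex (cos t) (sin t) : C) ^+ j = Complex (cos (j%:R * t)) (sin (j%:R * t)).
Proof.
elim: j => [|j IH]; first by rewrite expr0 mul0r cos0 sin0.
rewrite exprS IH; simpc.
by rewrite -natr1 mulrDl mul1r addrC cosD sinD; congr Complex; ring.
Qed.

Lemma cis_norm (t : R) : Num.conj (Complex (cos t) (sin t) : C) * Complex (cos t) (sin t) = 1.
Proof.
rewrite /= ; simpc.
by rewrite -!expr2 cos2Dsin2 mulrC subrr.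
Qed.

Lemma cos_lt1 (x : R) : 0 < x < pi *+ 2 -> cos x < 1.
Proof.
move=> /andP[h0 h1].
have -> : x = (x / 2) *+ 2 by rewrite -mulr_natr divfK // pnatr_eq0.
rewrite cos_mulr2n cos2sin2.
have : 0 < sin (x / 2).
  apply: sin_gt0_pi; apply/andP; split; first by rewrite divr_gt0.
  by rewrite ltr_pdivrMr // mulr_natr.
move=> hs.
have : 0 < sin (x / 2) ^+ 2 by rewrite exprn_gt0.
move=> hs2; rewrite mulrnBl mulr2n; lra.
Qed.

Variable n : nat -> nat.
Local Notation zeta := (zeta R n).

Lemma zeta_pow k j : zeta k ^+ j =
  Complex (cos (j%:R * (2 * pi / (n k)%:R))) (sin (j%:R * (2 * pi / (n k)%:R))).
Proof. exact: cis_pow. Qed.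

Lemma zeta_norm k j : Num.conj (zeta k ^+ j) * zeta k ^+ j = 1.
Proof. by rewrite zeta_pow cis_norm. Qed.

Lemma zeta_n k : (0 < n k)%N -> zeta k ^+ n k = 1.
Proof.
move=> hn; rewrite zeta_pow mulrC divfK ?pnatr_eq0 -?lt0n //.
by rewrite mulr_natl cos2pi sin2pi.
Qed.

Lemma zeta_ne1 k j : (0 < j)%N -> (j < n k)%N -> zeta k ^+ j != 1.
Proof.
move=> hj hjn; rewrite zeta_pow.
apply/eqP => -[hc _].
have : cos (j%:R * (2 * pi / (n k)%:R) : R) < 1.
  apply: cos_lt1.
  have hn : (0 : R) < (n k)%:R by rewrite ltr0n; apply: leq_trans hjn.
  have hp := pi_gt0 R.
  apply/andP; split.
    by rewrite mulr_gt0 ?ltr0n // divr_gt0 // mulr_gt0.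
  rewrite mulrA ltr_pdivrMr // -mulr_natr mulrC.
  have hj2 : (j%:R : R) < (n k)%:R by rewrite ltr_nat.
  rewrite mul1r -mulr_natr; nra.
by rewrite hc ltxx.
Qed.


Lemma zeta_eq k b b' : (b < b')%N -> (b' < n k)%N -> zeta k ^+ b != zeta k ^+ b'.
Proof.
move=> hbb hb'; apply/eqP => e.
have hz : zeta k ^+ b != 0.
  apply/eqP => h; have := zeta_norm k b; rewrite h mulr0 => /eqP; by rewrite eq_sym oner_eq0.
have : zeta k ^+ (b' - b) = 1.
  apply: (mulfI hz); rewrite -exprD subnKC ?mulr1 //; exact: ltnW.
apply/eqP; apply: zeta_ne1; first by rewrite subn_gt0.
by apply: leq_ltn_trans hb'; exact: leq_subr.
Qed.

Lemma zeta_orth k b b' : (b < n k)%N -> (b' < n k)%N ->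
  \sum_(a < n k) zeta k ^+ (b * a) * Num.conj (zeta k ^+ (b' * a)) = (b == b')%:R * (n k)%:R.
Proof.
move=> hb hb'.
have hn : (0 < n k)%N by apply: leq_ltn_trans hb.
case: (eqVneq b b') => [<-|hne].
  under eq_bigr do rewrite mulrC zeta_norm.
  by rewrite sumr_const card_ord mul1r.
rewrite mul0r.
set w := zeta k ^+ b * Num.conj (zeta k ^+ b').
have e : forall a, zeta k ^+ (b * a) * Num.conj (zeta k ^+ (b' * a)) = w ^+ a.
  by move=> a; rewrite !exprM rmorphXn exprMn.
under eq_bigr do rewrite e.
have wn : w ^+ n k = 1.
  rewrite exprMn -rmorphXn -!exprM !(mulnC _ (n k)) !exprM zeta_n // !expr1n.
  by rewrite rmorph1 mulr1.
have w1 : w != 1.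
  apply/eqP => hw.
  have : zeta k ^+ b = zeta k ^+ b'.
    by rewrite -[RHS]mul1r -hw /w -mulrA zeta_norm mulr1.
  case: (ltngtP b b') => h.
  - by apply/eqP; apply: zeta_eq.
  - by move/esym; apply/eqP; apply: zeta_eq.
  - by move: hne; rewrite h eqxx.
have := subrX1 w (n k); rewrite wn subrr => /esym/eqP.
by rewrite mulf_eq0 subr_eq0 (negbTE w1) /= => /eqP.
Qed.

End Z.

Section S.
Variable R : realType.
Local Notation C := R[i].

Lemma real_quad (z c : C) : 0 <= c ->
  (forall s : R, 0 <= (s%:C)%C * z + ((s * s)%:C)%C * c) -> z = 0.
Proof.
case: z => zr zi; case: c => cr ci => hc H.
move: hc; rewrite lecE /= => /andP[/eqP ci0 hcr]; subst ci.
have := H 1; simpc => /andP[/eqP -> _].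
set D := cr + 1.
have hD : 0 < D by rewrite /D; lra.
have := H (- zr / D); simpc => /andP[_ h2].
have e : - (zr / D * zr) + zr / D * (zr / D) * cr = - (zr / D) ^+ 2.
  rewrite /D; field; lra.
move: h2; rewrite e => h2.
have : (zr / D) ^+ 2 <= 0.
  by rewrite -oppr_ge0.
have := sqr_ge0 (zr / D) => h3 h4.
have : (zr / D) ^+ 2 = 0 by apply/eqP; rewrite eq_le h4 h3.
move/eqP; rewrite sqrf_eq0 mulf_eq0 invr_eq0 => /orP[/eqP->|/eqP hD0]; first by [].
by move: hD; rewrite hD0 ltxx.
Qed.

Lemma conjC_real (s : R) : Num.conj ((s%:C)%C : C) = (s%:C)%C.
Proof. exact: conjc_real. Qed.

Variables (N : nat) (n : nat -> nat).
Local Notation d := (hdim N n).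
Local Notation adj := (adj R).
Local Notation dotv := (dotv R N n).
Local Notation outer := (outer R N n).

Lemma adjM p q r (A : 'M[C]_(p, q)) (B : 'M[C]_(q, r)) :
  adj (A *m B) = adj B *m adj A.
Proof. by rewrite /Defs.adj map_mxM trmx_mul. Qed.

Lemma adjK p q (A : 'M[C]_(p, q)) : adj (adj A) = A.
Proof. by apply/matrixP => i j; rewrite !mxE conjCK. Qed.

Lemma adjZ p q (c : C) (A : 'M[C]_(p, q)) : adj (c *: A) = Num.conj c *: adj A.
Proof. by apply/matrixP => i j; rewrite !mxE rmorphM. Qed.

Lemma adjD p q (A B : 'M[C]_(p, q)) : adj (A + B) = adj A + adj B.
Proof. by apply/matrixP => i j; rewrite !mxE rmorphD. Qed.

Lemma adj0 p q : adj (0 : 'M[C]_(p, q)) = 0.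
Proof. by apply/matrixP => i j; rewrite !mxE rmorph0. Qed.

Lemma adj_sum p q I (r : seq I) (P : pred I) (F : I -> 'M[C]_(p, q)) :
  adj (\sum_(i <- r | P i) F i) = \sum_(i <- r | P i) adj (F i).
Proof.
elim/big_rec2: _ => [|i A B _ <-]; first exact: adj0.
exact: adjD.
Qed.

Lemma outerE (u v y : 'cV[C]_d) : outer u v *m y = dotv v y *: u.
Proof.
by rewrite /Defs.outer -mulmxA (mx11_scalar (adj v *m y)) mul_mx_scalar.
Qed.

Lemma adj_outer (u v : 'cV[C]_d) : adj (outer u v) = outer v u.
Proof. by rewrite /Defs.outer adjM adjK. Qed.

Lemma outer_mul (u v w x : 'cV[C]_d) :
  outer u v *m outer w x = dotv v w *: outer u x.
Proof.
rewrite /Defs.outer mulmxA -(mulmxA u) (mx11_scalar (adj v *m w)) mul_mx_scalar.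
by rewrite -scalemxAl.
Qed.

Lemma dotv_delta (i : 'I_d) (v : 'cV[C]_d) : dotv (delta_mx i 0) v = v i 0.
Proof.
rewrite /Defs.dotv.
have -> : adj (delta_mx i 0 : 'cV[C]_d) = delta_mx 0 i.
  by apply/matrixP => a b; rewrite !mxE andbC; case: (_ && _); rewrite ?rmorph1 ?rmorph0.
by rewrite -rowE mxE.
Qed.

Lemma dotvDr (u v w : 'cV[C]_d) : dotv u (v + w) = dotv u v + dotv u w.
Proof. by rewrite /Defs.dotv mulmxDr mxE. Qed.
Lemma dotvZr (u v : 'cV[C]_d) c : dotv u (c *: v) = c * dotv u v.
Proof. by rewrite /Defs.dotv -scalemxAr mxE. Qed.
Lemma dotvDl (u v w : 'cV[C]_d) : dotv (u + v) w = dotv u w + dotv v w.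
Proof. by rewrite /Defs.dotv adjD mulmxDl mxE. Qed.
Lemma dotvZl (u v : 'cV[C]_d) c : dotv (c *: u) v = Num.conj c * dotv u v.
Proof. by rewrite /Defs.dotv adjZ -scalemxAl mxE. Qed.

Lemma mx_adj_ext (M : 'M[C]_d) : (forall y : 'cV[C]_d, adj y *m M = 0) -> M = 0.
Proof.
move=> H; apply/matrixP => i j.
have := H (delta_mx i 0); move/matrixP/(_ 0 j).
have -> : adj (delta_mx i 0 : 'cV[C]_d) = delta_mx 0 i.
  by apply/matrixP => a b; rewrite !mxE andbC; case: (_ && _); rewrite ?rmorph1 ?rmorph0.
by rewrite -rowE !mxE.
Qed.

Lemma psd_zero (rho : 'M[C]_d) (x : 'cV[C]_d) :
  positive_op R N n rho -> dotv x (rho *m x) = 0 ->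
  rho *m x = 0 /\ adj x *m rho = 0.
Proof.
move=> Hp Hq.
have key : forall y, dotv x (rho *m y) = 0 /\ dotv y (rho *m x) = 0.
  move=> y.
  set a := dotv x (rho *m y); set b := dotv y (rho *m x); set c := dotv y (rho *m y).
  have hq : forall t, 0 <= t * a + Num.conj t * b + Num.conj t * t * c.
    move=> t; have := Hp (x + t *: y).
    rewrite mulmxDr -scalemxAr !dotvDl !dotvDr !dotvZl !dotvZr Hq -/a -/b -/c.
    by rewrite add0r !mulrA addrA.
  have hc : 0 <= c by exact: Hp.
  have e1 : a + b = 0.
    apply: (real_quad _ _ hc) => s.
    have := hq (s%:C)%C; rewrite conjC_real.
    by rewrite rmorphM /= mulrDr.
  have e2 : 'i%C * (a - b) = 0.
    apply: (real_quad _ _ hc) => s.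
    have := hq ('i%C * (s%:C)%C).
    have -> : Num.conj ('i%C * (s%:C)%C : C) = - ('i%C * (s%:C)%C).
      by rewrite rmorphM /= conjC_real; simpc.
    have -> : - ('i%C * (s%:C)%C) * ('i%C * (s%:C)%C) = ((s * s)%:C)%C :> C.
      rewrite mulNr mulrACA -expr2 sqr_i rmorphM /=; by rewrite mulN1r opprK.
    suff -> : (s%:C)%C * ('i%C * (a - b)) = 'i%C * (s%:C)%C * a + - ('i%C * (s%:C)%C) * b by [].
    ring.
  have eab : a = b.
    have hi : ('i%C : C) != 0 by rewrite eq_complex /= eqxx oner_eq0.
    by move/eqP: e2; rewrite mulf_eq0 subr_eq0 (negbTE hi) /= => /eqP.
  have a0 : a = 0.
    by move: e1; rewrite -eab -mulr2n => /eqP; rewrite mulrn_eq0 /= => /eqP.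
  by split => //; rewrite -eab.
split.
  apply/matrixP => i j; rewrite (ord1 j) -dotv_delta mxE.
  by case: (key (delta_mx i 0)).
apply/matrixP => i j; rewrite (ord1 i) [RHS]mxE.
case: (key (delta_mx j 0)) => h _; rewrite -h.
rewrite /Defs.dotv mulmxA -colE !mxE; apply: eq_bigr => k _; congr (adj x _ _ * _); exact: val_inj.
Qed.


Lemma inv_kraus Gam gam (rho : 'M[C]_d) (x : 'cV[C]_d) :
  positive_op R N n rho -> invariant_st R N n Gam gam rho ->
  rho *m x = 0 -> adj x *m rho = 0 ->
  forall L, L \in kraus R N n Gam ->
  dotv (adj L *m x) (rho *m (adj L *m x)) = 0.
Proof.
move=> Hp Hinv hx hxa L HL.
have hx' : forall p (A : 'M[C]_(p, d)), A *m rho *m x = 0.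
  by move=> p A; rewrite -mulmxA hx mulmx0.
have hxa' : forall p (A : 'M[C]_(d, p)), adj x *m rho *m A = 0.
  by move=> p A; rewrite hxa mul0mx.
have E : adj x *m generator R N n Gam gam rho *m x =
   \sum_(L <- kraus R N n Gam) adj (adj L *m x) *m rho *m (adj L *m x).
  rewrite /generator mulmxDr mulmxDl.
  rewrite -scalemxAr -scalemxAl mulmxBr mulmxBl !mulmxA hx' hxa' mul0mx subrr scaler0 add0r.
  rewrite mulmx_sumr mulmx_suml; apply: eq_bigr => K _.
  rewrite mulmxBr mulmxBl -scalemxAr -scalemxAl mulmxDr mulmxDl !mulmxA hx' hxa' mul0mx.
  by rewrite mul0mx addr0 scaler0 subr0 adjM adjK.
have E0 : \sum_(K <- kraus R N n Gam) dotv (adj K *m x) (rho *m (adj K *m x)) = 0.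
  have := congr1 (fun M : 'M[C]_1 => M 0 0) E; rewrite /= Hinv mulmx0 mul0mx mxE summxE.
  move=> e; rewrite [RHS]e; apply: eq_bigr => K _; by rewrite /Defs.dotv mulmxA.
have pos : forall K, 0 <= dotv (adj K *m x) (rho *m (adj K *m x)) by move=> K; exact: Hp.
move: E0; rewrite (big_rem L HL) /= => /eqP.
rewrite paddr_eq0 ?pos //; first by case/andP => /eqP.
by apply: sumr_ge0 => K _.
Qed.


Local Notation ket_site := (ket_site R N n).

Lemma site_uniq k a (hk : (k < N)%N) (ha : (a < n k)%N) (x : basis N n) :
  site_idx N n x = Some (k, a) ->
  x = inr (existT (fun k0 : 'I_N => 'I_(n k0)) (Ordinal hk) (Ordinal ha)).
Proof.
case: x => [s|[k' a']] //= [ek ea].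
case: k' ek a' ea => k'' hk'' /= ek a' ea; subst k''.
rewrite (bool_irrelevance hk'' hk) in a' ea *.
by congr (inr (existT _ _ _)); apply: val_inj.
Qed.

Lemma dotv_site k a b : (k < N)%N -> (a < n k)%N -> (b < n k)%N ->
  dotv (ket_site k a) (ket_site k b) = (a == b)%:R.
Proof.
move=> hk ha hb.
set x0 := inr (existT (fun k0 : 'I_N => 'I_(n k0)) (Ordinal hk) (Ordinal ha)) : basis N n.
rewrite /Defs.dotv mxE (bigD1 (enum_rank x0)) //= big1.
  rewrite addr0 !mxE enum_rankK /= eqxx rmorph1 mul1r.
  by congr (_%:R); case: eqP => [[->]|h]; [rewrite eqxx | case: eqP => // e; case: h; rewrite e].
move=> i hi; rewrite !mxE.
case: eqP => [h|_]; last by rewrite rmorph0 mul0r.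
by move: hi; rewrite -(enum_valK i) (site_uniq _ _ hk ha _ h) eqxx.
Qed.

Definition blk k' k (f : nat -> nat -> C) : 'M[C]_d :=
  \sum_(b < n k') \sum_(a < n k) f b a *: outer (ket_site k' b) (ket_site k a).

Lemma blk_ext k' k f g :
  (forall b a, (b < n k')%N -> (a < n k)%N -> f b a = g b a) -> blk k' k f = blk k' k g.
Proof.
move=> H; apply: eq_bigr => b _; apply: eq_bigr => a _; by rewrite H.
Qed.

Lemma adj_blk k' k f : adj (blk k' k f) = blk k k' (fun a b => Num.conj (f b a)).
Proof.
rewrite /blk adj_sum exchange_big; apply: eq_bigr => a _.
rewrite adj_sum; apply: eq_bigr => b _.
by rewrite adjZ adj_outer.
Qed.

Lemma outer_blk k2 k1 k0 c b g : (k1 < N)%N -> (b < n k1)%N ->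
  outer (ket_site k2 c) (ket_site k1 b) *m blk k1 k0 g =
  \sum_(a < n k0) g b a *: outer (ket_site k2 c) (ket_site k0 a).
Proof.
move=> hk hb; rewrite /blk mulmx_sumr (bigD1 (Ordinal hb)) //= [X in _ + X]big1.
  rewrite addr0 mulmx_sumr; apply: eq_bigr => a _.
  by rewrite -scalemxAr outer_mul dotv_site // eqxx scale1r.
move=> b' hb'; rewrite mulmx_sumr big1 // => a _.
rewrite -scalemxAr outer_mul dotv_site //.
suff -> : (b == b') = false by rewrite scale0r scaler0.
apply/negbTE; apply: contra hb' => /eqP e.
by apply/eqP/val_inj.
Qed.

Lemma blk_mul k2 k1 k0 f g : (k1 < N)%N ->
  blk k2 k1 f *m blk k1 k0 g = blk k2 k0 (fun c a => \sum_(b < n k1) f c b * g b a).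
Proof.
move=> hk; rewrite {1}/blk mulmx_suml; apply: eq_bigr => c _.
rewrite mulmx_suml.
transitivity (\sum_(b < n k1) \sum_(a < n k0) (f c b * g b a) *: outer (ket_site k2 c) (ket_site k0 a)).
  apply: eq_bigr => b _; rewrite -scalemxAl outer_blk // scaler_sumr.
  by apply: eq_bigr => a _; rewrite scalerA.
rewrite exchange_big; apply: eq_bigr => a _.
by rewrite scaler_suml.
Qed.

Lemma blk_ket k' k f a : (k < N)%N -> (a < n k)%N ->
  blk k' k f *m ket_site k a = \sum_(b < n k') f b a *: ket_site k' b.
Proof.
move=> hk ha; rewrite /blk mulmx_suml; apply: eq_bigr => b _.
rewrite mulmx_suml (bigD1 (Ordinal ha)) //= [X in _ + X]big1.
  by rewrite addr0 -scalemxAl outerE dotv_site // eqxx scale1r.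
move=> a' ha'; rewrite -scalemxAl outerE dotv_site //.
suff -> : (a' == a :> nat) = false by rewrite scale0r scaler0.
apply/negbTE; apply: contra ha' => /eqP e.
by apply/eqP/val_inj.
Qed.

Lemma Zk_blk k : Zk R N n k =
  blk k.+1 k (fun b a => invsqrt R (n k)%:R * zeta R n k ^+ (b * a)).
Proof.
rewrite /Zk /blk scaler_sumr; apply: eq_bigr => b _.
rewrite scaler_sumr; apply: eq_bigr => a _; by rewrite scalerA.
Qed.


Lemma invsqrt_conj (x : R) : Num.conj (invsqrt R x) = invsqrt R x.
Proof. by rewrite /invsqrt /rC /=; simpc. Qed.

Lemma invsqrt_sq m : (0 < m)%N -> invsqrt R m%:R * invsqrt R m%:R * m%:R = 1 :> C.
Proof.
move=> hm; rewrite -(rmorph_nat (real_complex R)) /invsqrt /rC; simpc.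
have hs : 0 < Num.sqrt (m%:R : R) by rewrite sqrtr_gt0 ltr0n.
congr Complex.
rewrite -expr2 exprVn sqr_sqrtr ?ler0n // mulVf //.
by rewrite gt_eqF // ltr0n.
Qed.

Lemma sum_delta m (F : nat -> C) b' : (b' < m)%N ->
  \sum_(b < m) F b * (nat_of_ord b == b')%:R = F b'.
Proof.
move=> hb; rewrite (bigD1 (Ordinal hb)) //= [X in _ + X]big1 ?eqxx ?mulr1 ?addr0 //.
move=> b hb1; suff -> : (nat_of_ord b == b') = false by rewrite mulr0.
by apply/negbTE; apply: contra hb1 => /eqP e; apply/eqP/val_inj.
Qed.

Lemma sum_deltav m (F : nat -> 'cV[C]_d) b' : (b' < m)%N ->
  \sum_(b < m) (nat_of_ord b == b')%:R *: F b = F b'.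
Proof.
move=> hb; rewrite (bigD1 (Ordinal hb)) //= [X in _ + X]big1 ?eqxx ?scale1r ?addr0 //.
move=> b hb1; suff -> : (nat_of_ord b == b') = false by rewrite scale0r.
by apply/negbTE; apply: contra hb1 => /eqP e; apply/eqP/val_inj.
Qed.

Lemma ZZadj k : (k.+1 < N)%N -> (n k.+1 <= n k)%N ->
  Zk R N n k *m adj (Zk R N n k) = blk k.+1 k.+1 (fun b b' => (b == b')%:R).
Proof.
move=> hk hmono; rewrite Zk_blk adj_blk blk_mul; last exact: ltnW.
apply: blk_ext => b b' hb hb'.
have hb2 : (b < n k)%N by apply: leq_trans hmono.
have hb2' : (b' < n k)%N by apply: leq_trans hmono.
transitivity (invsqrt R (n k)%:R * invsqrt R (n k)%:R *
   \sum_(a < n k) zeta R n k ^+ (b * a) * Num.conj (zeta R n k ^+ (b' * a))).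
  rewrite mulr_sumr; apply: eq_bigr => a _; rewrite rmorphM /= invsqrt_conj; ring.
rewrite zeta_orth // mulrCA invsqrt_sq ?mulr1 //.
exact: leq_ltn_trans hb2.
Qed.

Lemma ZZadj_ket k b : (k.+1 < N)%N -> (n k.+1 <= n k)%N -> (b < n k.+1)%N ->
  Zk R N n k *m (adj (Zk R N n k) *m ket_site k.+1 b) = ket_site k.+1 b.
Proof.
move=> hk hm hb; rewrite mulmxA ZZadj // blk_ket //.
exact: sum_deltav.
Qed.

Lemma adjZZadj k : (k.+1 < N)%N -> (n k.+1 <= n k)%N ->
  adj (Zk R N n k) *m Zk R N n k *m adj (Zk R N n k) = adj (Zk R N n k).
Proof.
move=> hk hm; rewrite -mulmxA ZZadj // Zk_blk adj_blk blk_mul //.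
apply: blk_ext => a b ha hb; exact: (sum_delta _ (fun b0 => Num.conj (invsqrt R (n k)%:R * zeta R n k ^+ (b0 * a)))).

Qed.


Definition kerr (rho : 'M[C]_d) (x : 'cV[C]_d) := rho *m x = 0 /\ adj x *m rho = 0.

Lemma kerr0 rho : kerr rho 0.
Proof. by rewrite /kerr mulmx0 adj0 mul0mx. Qed.

Lemma kerrD rho x y : kerr rho x -> kerr rho y -> kerr rho (x + y).
Proof.
by move=> [h1 h2] [h3 h4]; rewrite /kerr mulmxDr adjD mulmxDl h1 h2 h3 h4 !addr0.
Qed.

Lemma kerrZ rho c x : kerr rho x -> kerr rho (c *: x).
Proof.
by move=> [h1 h2]; rewrite /kerr -scalemxAr adjZ -scalemxAl h1 h2 !scaler0; split.
Qed.

Lemma kerrZ_inv rho c x : c != 0 -> kerr rho (c *: x) -> kerr rho x.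
Proof.
by move=> hc /(kerrZ _ c^-1); rewrite scalerA mulVf // scale1r.
Qed.

Lemma kerr_sum rho I (r : seq I) (P : pred I) (F : I -> 'cV[C]_d) :
  (forall i, P i -> kerr rho (F i)) -> kerr rho (\sum_(i <- r | P i) F i).
Proof.
move=> H; elim/big_rec: _ => [|i x Pi Kx]; first exact: kerr0.
by apply: kerrD => //; apply: H.
Qed.

Lemma kerr_of_dot rho x : positive_op R N n rho ->
  (forall u, dotv x (rho *m u) = 0) -> kerr rho x.
Proof. by move=> Hp H; apply: psd_zero => //; apply: H. Qed.

Lemma kerr_blk rho k' k f y :
  (forall b, (b < n k')%N -> kerr rho (ket_site k' b)) -> kerr rho (blk k' k f *m y).
Proof.
move=> H; rewrite /blk mulmx_suml; apply: kerr_sum => b _.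
rewrite mulmx_suml; apply: kerr_sum => a _.
rewrite -scalemxAl outerE; apply: kerrZ; apply: kerrZ; apply: H; exact: ltn_ord.
Qed.

Lemma kerrZM rho c (M : 'M[C]_d) y : kerr rho (M *m y) -> kerr rho ((c *: M) *m y).
Proof. by move=> h; rewrite -scalemxAl; apply: kerrZ. Qed.

Lemma kerr_adjZM rho c (M : 'M[C]_d) y : kerr rho (adj M *m y) -> kerr rho (adj (c *: M) *m y).
Proof. by move=> h; rewrite adjZ; apply: kerrZM. Qed.

Lemma kerr_outer rho u v y : kerr rho u -> kerr rho (outer u v *m y).
Proof. by move=> h; rewrite outerE; apply: kerrZ. Qed.

Lemma rC_sqrt_neq0 (x : R) : 0 < x -> Num.conj (rC R (Num.sqrt x)) != 0.
Proof.
move=> hx; rewrite /rC /=; apply/eqP => -[] /eqP.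
by rewrite gt_eqF // sqrtr_gt0.
Qed.


Lemma main_sec (Gam gam : bool -> bohr -> R)
    (HN : (2 <= N)%N)
    (Hmono : forall k, (k.+1 < N)%N -> (n k.+1 <= n k)%N)
    (HGam : forall (e : bool) (w : bohr), valid_bohr N w -> 0 < Gam e w)
    (rho : 'M[C]_d) :
  is_state R N n rho ->
  invariant_st R N n Gam gam rho ->
  supported R N n rho
    (ominus R N n (Vsp R N n) (ran R N n (absZ R N n 0))) ->
  supported R N n rho (Wsp R N n Gam).
Proof.
move=> [Hp _] Hinv Hsupp.
have KV : forall u, Vgen R N n u -> kerr rho u.
  move=> u hu; apply: kerr_of_dot => // w.
  by case: (Hsupp w) => hV _; apply: hV.
have Kabs : forall w, kerr rho (absZ R N n 0 *m w).
  move=> w; apply: kerr_of_dot => // u.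
  by case: (Hsupp u) => _ hO; apply: hO; exists w.
have Kpm : forall b, kerr rho (ket_pm R N n b).
  case; apply: KV.
  by right; left.
  by left.
have Kphi0 : kerr rho (phi R N n 0 0).
  by apply: KV; right; right; left; exists 0%N.
have KphiN : kerr rho (phi R N n N.-1 0).
  by apply: KV; right; right; right; left; exists 0%N.
have memZ : forall k, (k.+1 < N)%N ->
    (rC R (Num.sqrt (Gam false (OmK k))) *: Zk R N n k \in kraus R N n Gam) /\
    (rC R (Num.sqrt (Gam true (OmK k))) *: adj (Zk R N n k) \in kraus R N n Gam).
  move=> k hk.
  have hki : k \in iota 0 N.-1 by rewrite mem_iota add0n leq0n /=; lia.
  by rewrite !mem_cat; split; apply/orP; right; apply/flatten_mapP;
    exists k => //; rewrite !inE eqxx ?orbT.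
have Kclos : forall k, (k.+1 < N)%N -> forall x, kerr rho x ->
    kerr rho (Zk R N n k *m x) /\ kerr rho (adj (Zk R N n k) *m x).
  move=> k hk x [hx hxa]; case: (memZ k hk) => m1 m2.
  have h1 := inv_kraus Gam gam rho x Hp Hinv hx hxa _ m1.
  have h2 := inv_kraus Gam gam rho x Hp Hinv hx hxa _ m2.
  have [k1 _] := psd_zero _ _ Hp h1.
  have [k2 _] := psd_zero _ _ Hp h2.
  split.
    apply: (kerrZ_inv _ _ _ (rC_sqrt_neq0 _ (HGam true (OmK k) hk))).
    have := psd_zero _ _ Hp h2; by rewrite adjZ adjK -scalemxAl.
  apply: (kerrZ_inv _ _ _ (rC_sqrt_neq0 _ (HGam false (OmK k) hk))).
  have := psd_zero _ _ Hp h1; by rewrite adjZ -scalemxAl.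
have F4 : forall k, (0 < k)%N -> (k < N)%N -> forall b, (b < n k)%N ->
    kerr rho (ket_site k b).
  elim=> [//|k IH] _ hk b hb.
  rewrite -(ZZadj_ket k b hk (Hmono k hk) hb).
  suff hx : kerr rho (adj (Zk R N n k) *m ket_site k.+1 b) by case: (Kclos k hk _ hx).
  case: k IH hk hb => [|k] IH hk hb.
    rewrite -(adjZZadj 0 hk (Hmono 0%N hk)) -mulmxA; exact: Kabs.
  rewrite Zk_blk adj_blk; apply: kerr_blk => a ha; apply: IH => //.
  exact: ltnW.
have F5 : forall k, (k.+1 < N)%N -> forall y,
    kerr rho (Zk R N n k *m y) /\ kerr rho (adj (Zk R N n k) *m y).
  move=> k hk y; split.
    rewrite Zk_blk; apply: kerr_blk => b hb; exact: F4.
  case: k hk => [|k] hk.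
    rewrite -(adjZZadj 0 hk (Hmono 0%N hk)) -mulmxA; exact: Kabs.
  rewrite Zk_blk adj_blk; apply: kerr_blk => a ha; apply: F4 => //.
  exact: ltnW.
have F6 : forall L, L \in kraus R N n Gam -> forall y,
    kerr rho (L *m y) /\ kerr rho (adj L *m y).
  move=> L; rewrite mem_cat => /orP[|].
    rewrite !inE => /or4P[/eqP->|/eqP->|/eqP->|/eqP->] y;
      rewrite ?adjZ ?adj_outer -?scalemxAl; try (split; apply: kerrZ; apply: kerr_outer; done).
    by rewrite adj0 !mul0mx; split; apply: kerr0.
  move/flatten_mapP => [k]; rewrite mem_iota add0n => /andP[_ hk].
  have hk' : (k.+1 < N)%N by lia.
  rewrite !inE => /orP[/eqP->|/eqP->] y; case: (F5 k hk' y) => f1 f2;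
    (split; [apply: kerrZM | apply: kerr_adjZM; rewrite ?adjK]) => //.
move=> u L hL.
have [k1 k2] := (conj (fun y => (F6 L hL y).1) (fun y => (F6 L hL y).2)).
split.
  rewrite mulmxA (mx_adj_ext (L *m rho)) ?mul0mx // => y.
  by case: (k2 y) => _; rewrite adjM adjK mulmxA.
rewrite mulmxA (mx_adj_ext (adj L *m rho)) ?mul0mx // => y.
by case: (k1 y) => _; rewrite adjM mulmxA.
Qed.

End S.

Theorem corollary3p18 (R : realType) (N : nat) (n : nat -> nat)
    (Gam gam : bool -> bohr -> R)
    (HN : (2 <= N)%N)
    (Hmono : forall k, (k.+1 < N)%N -> (n k.+1 <= n k)%N)
    (Hpos : forall k, (k < N)%N -> (1 <= n k)%N)
    (HGam : forall (e : bool) (w : bohr), valid_bohr N w -> 0 < Gam e w)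
    (rho : 'M[R[i]]_(hdim N n)) :
  is_state R N n rho ->
  invariant_st R N n Gam gam rho ->
  supported R N n rho
    (ominus R N n (Vsp R N n) (ran R N n (absZ R N n 0))) ->
  supported R N n rho (Wsp R N n Gam).
Proof. exact: (main_sec R N n Gam gam HN Hmono HGam rho). Qed.
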